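(* Let $f$ be an L-additive arithmetic function whose associated completely multiplicative function $h_f$ is nonzero-valued, let $\Lambda_f$ be its generalized von Mangoldt function, and let $g$ be a completely additive arithmetic function. Then for every positive integer $n$, $$(\Lambda_f\ast g)(n)=\frac{f(n)g(n)}{h_f(n)}-(1\ast g\Lambda_f)(n).$$
   Context: An arithmetic function $f:\mathbb{N}\to\mathbb{C}$ is L-additive if there is a completely multiplicative function $h_f$ such that $f(mn)=f(m)h_f(n)+f(n)h_f(m)$ for all positive integers $m,n$; such an $h_f$ is fixed. $\Lambda_f(n)=\frac{f(p)}{h_f(p)}$ if $n=p^k$ for some prime $p$ and integer $k\geq1$, and $0$ otherwise. $g$ completely additive means $g(mn)=g(m)+g(n)$ for all $m,n$. $1$ is the constant function $1$, $\ast$ is Dirichlet convolution $(F\ast G)(n)=\sum_{d\mid n}F(d)G(n/d)$, and $g\Lambda_f$ is the pointwise product. *)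

(* Defs.v *)
From mathcomp Require Import all_boot all_algebra.
Set Implicit Arguments. Unset Strict Implicit. Unset Printing Implicit Defensive.
Import GRing.Theory Num.Theory.
Local Open Scope ring_scope.

(* Arithmetic functions N -> C, modelled as nat -> C; the value at 0 is irrelevant. *)

Definition completely_multiplicative (C : nzRingType) (h : nat -> C) : Prop :=
  forall m n : nat, (0 < m)%N -> (0 < n)%N -> h (m * n)%N = h m * h n.

Definition completely_additive (C : nzRingType) (g : nat -> C) : Prop :=
  forall m n : nat, (0 < m)%N -> (0 < n)%N -> g (m * n)%N = g m + g n.

Definition L_additive_wrt (C : nzRingType) (f h : nat -> C) : Prop :=
  completely_multiplicative h /\
  forall m n : nat, (0 < m)%N -> (0 < n)%N ->
    f (m * n)%N = f m * h n + f n * h m.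

Definition is_prime_power (n : nat) : bool := size (primes n) == 1%N.

(* generalized von Mangoldt function: f(p)/h(p) if n = p^k (k>=1), else 0;
   for a prime power n, pdiv n is its unique prime p *)
Definition LambdaF (C : fieldType) (f h : nat -> C) (n : nat) : C :=
  if is_prime_power n then f (pdiv n) / h (pdiv n) else 0.

Definition dconv (C : nzRingType) (F G : nat -> C) (n : nat) : C :=
  \sum_(d <- divisors n) F d * G (n %/ d)%N.

Definition one_fn (C : nzRingType) : nat -> C := fun _ => 1.

(* Main.v *)
Require Import Defs.
From mathcomp Require Import all_boot all_algebra.
From mathcomp Require Import ring.
Import GRing.Theory Num.Theory.
Local Open Scope ring_scope.

Section S.
Variables (C : numClosedFieldType) (f h : nat -> C).
Hypothesis hL : L_additive_wrt f h.
Hypothesis hnz : forall n : nat, (0 < n)%N -> h n != 0.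

Let F n := f n / h n.

Lemma F_add m n : (0 < m)%N -> (0 < n)%N -> F (m * n) = F m + F n.
Proof.
move=> m0 n0; case: hL => hM fM; rewrite /F fM // hM //.
have hm := hnz _ m0; have hn := hnz _ n0.
by field; rewrite hn hm.
Qed.

Lemma F1 : F 1 = 0.
Proof.
have := F_add 1 1 isT isT; rewrite muln1 => E.
by apply: (addrI (F 1)); rewrite addr0 -E.
Qed.

Lemma F_exp p k : (0 < p)%N -> F (p ^ k) = F p *+ k.
Proof.
move=> p0; elim: k => [|k IH]; first by rewrite expn0 F1.
by rewrite expnS F_add ?expn_gt0 ?p0 // IH mulrS.
Qed.

Lemma F_prod (s : seq nat) (e : nat -> nat) : all (fun p => 0 < p)%N s ->
  F (\prod_(p <- s) p ^ e p) = \sum_(p <- s) F p *+ e p.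
Proof.
elim: s => [|p s IH] /=; first by rewrite !big_nil F1.
case/andP=> p0 sa; rewrite !big_cons F_add ?expn_gt0 ?p0 // ?IH ?F_exp //.
rewrite big_seq; apply: (big_ind (fun x => 0 < x)%N) => // [a b|q qs]; first by rewrite muln_gt0 => -> ->.
by rewrite expn_gt0; move/allP: sa => /(_ q qs) ->.
Qed.

Lemma F_decomp n : (0 < n)%N -> F n = \sum_(p <- primes n) F p *+ logn p n.
Proof.
move=> n0; rewrite {1}(prod_prime_decomp n0) prime_decompE big_map /=.
rewrite F_prod //; apply/allP => p; rewrite mem_primes => /andP[pp _].
exact: prime_gt0.
Qed.

Lemma ppP d : is_prime_power d -> primes d = [:: pdiv d].
Proof. by rewrite /is_prime_power /pdiv; case: (primes d) => [|a [|b s]]. Qed.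

Lemma count_pp n p : (0 < n)%N -> p \in primes n ->
  count (fun d => is_prime_power d && (pdiv d == p)) (divisors n) = logn p n.
Proof.
move=> n0 pn; have pr : prime p by move: pn; rewrite mem_primes => /andP[].
rewrite -size_filter.
have -> : logn p n = size [seq p ^ k | k <- iota 1 (logn p n)]%N
  by rewrite size_map size_iota.
apply: perm_size; apply: uniq_perm.
- exact: filter_uniq (divisors_uniq n).
- by rewrite map_inj_uniq ?iota_uniq //; exact: expnI (prime_gt1 pr).
move=> d; rewrite mem_filter -dvdn_divisors //; apply/idP/mapP.
- case/andP => /andP[ppd /eqP pd] dn.
  have d0 : (0 < d)%N := dvdn_gt0 n0 dn.
  have pnd : p.-nat d by rewrite /pnat d0 (ppP _ ppd) pd /= !inE eqxx.
  case: (p_natP pnd) => k dk; exists k => //.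
  rewrite mem_iota; apply/andP; split.
    case: k dk => // dk; move: ppd; by rewrite /is_prime_power dk.
  by rewrite add1n ltnS -pfactor_dvdn // -dk.
- case=> k; rewrite mem_iota => /andP[k1 kl] ->.
  case: k k1 kl => // k _ kl.
  rewrite /is_prime_power primesX // primes_prime // pdiv_pfactor // eqxx /=.
  by rewrite pfactor_dvdn // -ltnS -add1n.
Qed.

Lemma sum_Lambda n : (0 < n)%N -> \sum_(d <- divisors n) LambdaF f h d = F n.
Proof.
move=> n0; rewrite F_decomp //.
transitivity (\sum_(d <- divisors n) \sum_(p <- primes n)
   (if is_prime_power d && (pdiv d == p) then F p else 0)).
  apply: eq_big_seq => d; rewrite -dvdn_divisors // => dn.
  rewrite /LambdaF; case: ifP => ppd /=.
    rewrite -big_mkcond /= -big_filter.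
    have d1 : (1 < d)%N.
      by rewrite ltnNge -ltnS -primes_eq0 (ppP _ ppd).
    have pdn : pdiv d \in primes n.
      by rewrite mem_primes pdiv_prime // n0 (dvdn_trans (pdiv_dvd d) dn).
    rewrite (eq_filter (a2 := pred1 (pdiv d))); last by move=> x; rewrite /= eq_sym.
    by rewrite filter_pred1_uniq ?primes_uniq // big_seq1.
  by rewrite big1.
rewrite exchange_big /=; apply: eq_big_seq => p pn.
rewrite -big_mkcond big_const_seq count_pp //.
by elim: (logn p n) => [|k IH] //=; rewrite IH mulrS.
Qed.
End S.

Lemma divisors_rev (C : nzRingType) (G : nat -> C) n : (0 < n)%N ->
  \sum_(d <- divisors n) G (n %/ d)%N = \sum_(d <- divisors n) G d.
Proof.
move=> n0.
have dd : forall d, (d %| n)%N -> (n %/ (n %/ d) = d)%N.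
  by move=> d dn; rewrite divnA // mulKn.
have P : perm_eq [seq (n %/ d)%N | d <- divisors n] (divisors n).
  apply: uniq_perm.
  - rewrite map_inj_in_uniq ?divisors_uniq // => a b.
    rewrite -!dvdn_divisors // => an bn E.
    by rewrite -(dd a an) E dd.
  - exact: divisors_uniq.
  move=> x; apply/idP/idP.
    by case/mapP=> d; rewrite -!dvdn_divisors // => dn ->; apply: dvdn_div.
  rewrite -dvdn_divisors // => xn; apply/mapP; exists (n %/ x)%N; last by rewrite dd.
  by rewrite -dvdn_divisors // dvdn_div.
by rewrite perm_sym in P; rewrite [RHS](perm_big _ P) big_map.
Qed.


Theorem theorem2p4 (C : numClosedFieldType) (f h g : nat -> C) :
  L_additive_wrt f h ->
  (forall n : nat, (0 < n)%N -> h n != 0) ->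
  completely_additive g ->
  forall n : nat, (0 < n)%N ->
    dconv (LambdaF f h) g n =
      f n * g n / h n - dconv (@one_fn C) (fun m => g m * LambdaF f h m) n.
Proof.
move=> hL hnz gA n n0.
rewrite /dconv /one_fn (@divisors_rev _ (fun m => 1 * (g m * LambdaF f h m)) n n0).
transitivity (\sum_(d <- divisors n) (LambdaF f h d * g n - g d * LambdaF f h d)).
  apply: eq_big_seq => d; rewrite -dvdn_divisors // => dn.
  have d0 : (0 < d)%N := dvdn_gt0 n0 dn.
  have q0 : (0 < n %/ d)%N by rewrite divn_gt0 // dvdn_leq.
  have := gA d (n %/ d)%N d0 q0; rewrite mulnC divnK // => ->.
  ring.
rewrite sumrB -mulr_suml sum_Lambda //.
congr (_ - _); last by apply: eq_bigr => d _; rewrite mul1r.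
by rewrite mulrAC.
Qed.
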